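(* Let $0<\Delta\le\pi$ and let $f$ be a probability density on $\mathbb R$ whose characteristic function $\Phi(\omega)=\int f(t)e^{i\omega t}dt$ has support in $(-\Delta,\Delta)$ (with $f$ taken as the continuous function $f(t)=\frac1{2\pi}\int\Phi(\omega)e^{-i\omega t}d\omega$). Then the restriction of $f$ to the integers is a well-defined probability distribution on $\mathbb Z$, namely $\mathrm{prob}(k)=f(k)$ for $k\in\mathbb Z$, and its characteristic function $\Phi_{\mathbb Z}(\omega)=\sum_{k\in\mathbb Z}f(k)e^{i\omega k}$ satisfies $\Phi_{\mathbb Z}(\omega)=0$ for $|\omega|\in(\Delta,\pi]$. *)

(* Defs.v *)
From Stdlib Require Import Reals ZArith.
From Coquelicot Require Import Coquelicot.
Open Scope R_scope.

Definition cis (x : R) : C := (cos x, sin x).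

Definition is_sumZ {K : AbsRing} {V : NormedModule K} (a : Z -> V) (l : V) : Prop :=
  exists l1 l2 : V,
    is_series (fun n : nat => a (Z.of_nat n)) l1 /\
    is_series (fun n : nat => a (- Z.of_nat (S n))%Z) l2 /\
    l = plus l1 l2.

Definition is_integral_R {V : NormedModule R_AbsRing} (g : R -> V) (l : V) : Prop :=
  is_RInt_gen g (Rbar_locally m_infty) (Rbar_locally p_infty) l.

(* Main.v *)
Require Import Defs.
From Stdlib Require Import Reals ZArith Lia Lra.
From Coquelicot Require Import Coquelicot.
Open Scope R_scope.

Section Sums.
Context {G : AbelianGroup}.

Lemma sum_n_shift0 (g : nat -> G) N :
  sum_n g (S N) = plus (g O) (sum_n (fun k => g (S k)) N).
Proof.
  induction N.
  - rewrite sum_Sn, !sum_O. reflexivity.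
  - rewrite sum_Sn, IHN, sum_Sn. rewrite plus_assoc. reflexivity.
Qed.

Lemma sum_n_rev (g : nat -> G) N :
  sum_n (fun i => g (N - i)%nat) N = sum_n g N.
Proof.
  revert g; induction N; intro g.
  - rewrite !sum_O. reflexivity.
  - rewrite sum_Sn. rewrite Nat.sub_diag.
    rewrite (sum_n_ext_loc _ (fun i => (fun k => g (S k)) (N - i)%nat)).
    2:{ intros n Hn. f_equal. lia. }
    rewrite (IHN (fun k => g (S k))), sum_n_shift0, plus_comm. reflexivity.
Qed.

Definition DS (a : Z -> G) (N : nat) : G :=
  sum_n (fun j => sum_n (fun l => a (Z.of_nat j - Z.of_nat l)%Z) N) N.

Definition PP (a : Z -> G) (m : nat) : G := sum_n (fun n => a (Z.of_nat n)) m.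
Definition QQ (a : Z -> G) (m : nat) : G :=
  match m with O => zero | S m' => sum_n (fun n => a (- Z.of_nat (S n))%Z) m' end.
Definition TT (a : Z -> G) (m : nat) : G := plus (PP a m) (QQ a m).

Lemma DS_S (a : Z -> G) N :
  DS a (S N) = plus (DS a N) (TT a (S N)).
Proof.
  unfold DS.
  rewrite sum_Sn.
  rewrite (sum_n_ext _ (fun j => plus (sum_n (fun l => a (Z.of_nat j - Z.of_nat l)%Z) N)
        (a (Z.of_nat j - Z.of_nat (S N))%Z))).
  2:{ intro j. rewrite sum_Sn. reflexivity. }
  rewrite sum_n_plus.
  unfold TT, PP, QQ.
  assert (E1 : sum_n (fun l => a (Z.of_nat (S N) - Z.of_nat l)%Z) (S N)
             = sum_n (fun n => a (Z.of_nat n)) (S N)).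
  { rewrite <- sum_n_rev. apply sum_n_ext_loc. intros n Hn. f_equal. lia. }
  assert (E2 : sum_n (fun j => a (Z.of_nat j - Z.of_nat (S N))%Z) N
             = sum_n (fun n => a (- Z.of_nat (S n))%Z) N).
  { rewrite <- sum_n_rev. apply sum_n_ext_loc. intros n Hn. f_equal. lia. }
  rewrite <- E1, <- E2. rewrite sum_Sn.
  rewrite <- !plus_assoc. f_equal.
  rewrite plus_comm, <- plus_assoc. reflexivity.
Qed.

Lemma DS_TT (a : Z -> G) N : DS a N = sum_n (TT a) N.
Proof.
  induction N.
  - unfold DS, TT, PP, QQ. rewrite !sum_O. rewrite plus_zero_r. reflexivity.
  - rewrite DS_S, IHN, sum_Sn. reflexivity.
Qed.

Lemma sum_n_opp (g : nat -> G) N : sum_n (fun k => opp (g k)) N = opp (sum_n g N).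
Proof.
  induction N.
  - rewrite !sum_O; reflexivity.
  - rewrite !sum_Sn, IHN, opp_plus. reflexivity.
Qed.

Lemma DS_antisym (a : Z -> G) N : (forall k, a (- k)%Z = opp (a k)) ->
  DS a N = opp (DS a N).
Proof.
  intro H. unfold DS at 1.
  rewrite sum_n_switch.
  unfold DS. rewrite <- sum_n_opp. apply sum_n_ext. intro j.
  rewrite <- sum_n_opp. apply sum_n_ext. intro l.
  rewrite <- H. f_equal. lia.
Qed.

End Sums.

Definition Kf (N : nat) (x : R) : R := DS (G:=R_AbelianGroup) (fun k => cos (IZR k * x)) N.
Definition SA (N : nat) (x : R) : R := sum_n (fun j => cos (INR j * x)) N.
Definition SB (N : nat) (x : R) : R := sum_n (fun j => sin (INR j * x)) N.

Lemma sum_n_R_mult_l (c : R) (u : nat -> R) N : sum_n (fun k => c * u k) N = c * sum_n u N.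
Proof. apply (sum_n_mult_l (K:=R_Ring)). Qed.
Lemma sum_n_R_mult_r (c : R) (u : nat -> R) N : sum_n (fun k => u k * c) N = sum_n u N * c.
Proof. apply (sum_n_mult_r (K:=R_Ring)). Qed.
Lemma sum_n_R_plus (u v : nat -> R) N : sum_n (fun k => u k + v k) N = sum_n u N + sum_n v N.
Proof. apply (sum_n_plus (G:=R_AbelianMonoid)). Qed.

Lemma Kf_AB N x : Kf N x = SA N x ^ 2 + SB N x ^ 2.
Proof.
  unfold Kf, DS, SA, SB.
  replace (sum_n (fun j => cos (INR j * x)) N ^ 2) with
    (sum_n (fun j => sum_n (fun l => cos (INR j * x) * cos (INR l * x)) N) N).
  2:{ rewrite <- Rsqr_pow2; unfold Rsqr. rewrite <- sum_n_R_mult_r. apply sum_n_ext. intro j.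
      rewrite <- sum_n_R_mult_l. reflexivity. }
  replace (sum_n (fun j => sin (INR j * x)) N ^ 2) with
    (sum_n (fun j => sum_n (fun l => sin (INR j * x) * sin (INR l * x)) N) N).
  2:{ rewrite <- Rsqr_pow2; unfold Rsqr. rewrite <- sum_n_R_mult_r. apply sum_n_ext. intro j.
      rewrite <- sum_n_R_mult_l. reflexivity. }
  rewrite <- sum_n_R_plus. apply sum_n_ext. intro j.
  rewrite <- sum_n_R_plus. apply sum_n_ext. intro l.
  rewrite minus_IZR, <- !INR_IZR_INZ.
  replace ((INR j - INR l) * x) with (INR j * x - INR l * x) by ring.
  apply cos_minus.
Qed.

Lemma SAB_rec N x :
  SA N x * (cos x - 1) - SB N x * sin x = cos (INR (S N) * x) - 1 /\
  SA N x * sin x + SB N x * (cos x - 1) = sin (INR (S N) * x).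
Proof.
  induction N.
  - unfold SA, SB. rewrite !sum_O. simpl. rewrite Rmult_0_l, cos_0, sin_0, Rmult_1_l.
    rewrite !Rmult_1_l. split; ring.
  - unfold SA, SB in *. rewrite !sum_Sn. change (@plus R_AbelianMonoid) with Rplus.
    destruct IHN as [H1 H2].
    rewrite (S_INR (S N)).
    replace ((INR (S N) + 1) * x) with (INR (S N) * x + x) by ring.
    rewrite cos_plus, sin_plus. split; nra.
Qed.

Lemma Kf_identity N x : Kf N x * (2 - 2 * cos x) = 2 - 2 * cos (INR (S N) * x).
Proof.
  rewrite Kf_AB. destruct (SAB_rec N x) as [H1 H2].
  pose proof (sin2_cos2 x) as E1. pose proof (sin2_cos2 (INR (S N) * x)) as E2.
  unfold Rsqr in *.
  set (a := SA N x) in *. set (b := SB N x) in *.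
  set (c := cos x) in *. set (s := sin x) in *.
  set (C1 := cos (INR (S N) * x)) in *. set (S1 := sin (INR (S N) * x)) in *.
  replace (2 - 2 * C1) with ((C1 - 1)^2 + S1^2) by nra.
  rewrite <- H1, <- H2. nra.
Qed.

Lemma Kf_nonneg N x : 0 <= Kf N x.
Proof. rewrite Kf_AB. nra. Qed.

Lemma Kf_bound N x : cos x < 1 -> Kf N x <= 4 / (2 - 2 * cos x).
Proof.
  intro Hc. pose proof (Kf_identity N x) as E.
  pose proof (COS_bound (INR (S N) * x)).
  apply Rmult_le_reg_r with (2 - 2 * cos x). lra.
  rewrite E. unfold Rdiv. rewrite Rmult_assoc, Rinv_l by lra. lra.
Qed.

Lemma Kf_even N x : Kf N (- x) = Kf N x.
Proof.
  unfold Kf, DS. apply sum_n_ext; intro j; apply sum_n_ext; intro l.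
  replace (IZR (Z.of_nat j - Z.of_nat l) * - x) with (- (IZR (Z.of_nat j - Z.of_nat l) * x)) by ring.
  apply cos_neg.
Qed.

Lemma is_RInt_sum {V : NormedModule R_AbsRing} (F : nat -> R -> V) (L : nat -> V) a b N :
  (forall n, is_RInt (F n) a b (L n)) ->
  is_RInt (fun x => sum_n (fun n => F n x) N) a b (sum_n L N).
Proof.
  intro H. induction N.
  - rewrite sum_O. eapply is_RInt_ext. 2: apply (H O). intros; rewrite sum_O; reflexivity.
  - rewrite sum_Sn. eapply is_RInt_ext. 2: apply is_RInt_plus; [apply IHN | apply (H (S N))].
    intros; rewrite sum_Sn; reflexivity.
Qed.

Lemma is_RInt_DS {V : NormedModule R_AbsRing} (F : Z -> R -> V) (L : Z -> V) a b N :
  (forall k, is_RInt (F k) a b (L k)) ->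
  is_RInt (fun x => DS (fun k => F k x) N) a b (DS L N).
Proof.
  intro H. unfold DS. apply is_RInt_sum. intro j. apply is_RInt_sum. intro l. apply H.
Qed.

Definition c0 (k : Z) : R := if Z.eq_dec k 0 then 2 * PI else 0.

Lemma int_cos k : is_RInt (fun w => cos (IZR k * w)) (-PI) PI (c0 k).
Proof.
  unfold c0. destruct (Z.eq_dec k 0) as [->|Hk].
  - eapply is_RInt_ext with (f := fun _ => 1).
    { intros. rewrite Rmult_0_l, cos_0. reflexivity. }
    replace (2 * PI) with (scal (PI - - PI) 1).
    apply (is_RInt_const (V:=R_NormedModule)). unfold scal; simpl; unfold mult; simpl. ring.
  - assert (Hk' : IZR k <> 0) by (apply not_0_IZR; exact Hk).
    replace 0 with (minus (sin (IZR k * PI) / IZR k) (sin (IZR k * - PI) / IZR k)).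
    2:{ rewrite !sin_eq_0_1. unfold minus, plus, opp; simpl. unfold Rdiv. ring.
        exists (- k)%Z. rewrite opp_IZR. ring. exists k. reflexivity. }
    apply (is_RInt_derive (fun w => sin (IZR k * w) / IZR k)).
    + intros x _. auto_derive; auto. field. exact Hk'.
    + intros x _. apply (ex_derive_continuous (V:=R_NormedModule)). auto_derive. auto.
Qed.

Lemma sum_n_zero_R N : sum_n (fun _ : nat => 0) N = 0.
Proof. rewrite sum_n_const. apply Rmult_0_r. Qed.

Lemma TT_c0 m : TT (G:=R_AbelianGroup) c0 m = 2 * PI.
Proof.
  unfold TT.
  assert (HP : PP (G:=R_AbelianGroup) c0 m = 2 * PI).
  { unfold PP. induction m.
    - rewrite sum_O. reflexivity.
    - rewrite sum_Sn, IHm. unfold c0. destruct (Z.eq_dec (Z.of_nat (S m)) 0). lia.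
      unfold plus; simpl. ring. }
  rewrite HP. unfold QQ. destruct m.
  - unfold plus, zero; simpl. ring.
  - rewrite (sum_n_ext _ (fun _ => 0)). rewrite (sum_n_zero_R m). unfold plus; simpl. apply Rplus_0_r.
    intro n. unfold c0. destruct (Z.eq_dec _ 0). lia. reflexivity.
Qed.

Lemma int_Kf N : is_RInt (Kf N) (-PI) PI (2 * PI * INR (S N)).
Proof.
  replace (2 * PI * INR (S N)) with (DS (G:=R_AbelianGroup) c0 N).
  - apply (is_RInt_DS (V:=R_NormedModule) (fun k w => cos (IZR k * w))). apply int_cos.
  - rewrite DS_TT. rewrite (sum_n_ext _ (fun _ => 2 * PI)). rewrite sum_n_const. apply Rmult_comm.
    apply TT_c0.
Qed.

Lemma gen_approx {V : NormedModule R_AbsRing} (g : R -> V) l :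
  is_RInt_gen g (Rbar_locally m_infty) (Rbar_locally p_infty) l ->
  forall eps : posreal, exists A B, forall a b, a < A -> B < b ->
    exists z, is_RInt g a b z /\ ball l eps z.
Proof.
  intros H eps. unfold is_RInt_gen in H.
  assert (Hf : Filter (filter_prod (Rbar_locally m_infty) (Rbar_locally p_infty)))
    by (apply filter_prod_filter; apply Rbar_locally_filter).
  pose proof (proj1 (@filterlimi_locally _ _ _ Hf _ l) H eps) as H'.
  destruct H' as [Q R0 HQ HR HQR].
  destruct HQ as [A HA]. destruct HR as [B HB].
  exists A, B. intros a b Ha Hb. apply (HQR a b (HA a Ha) (HB b Hb)).
Qed.

Lemma gen_compact {V : CompleteNormedModule R_AbsRing} (g : R -> V) l P :
  0 < P -> (forall w, P <= Rabs w -> g w = zero) ->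
  is_RInt_gen g (Rbar_locally m_infty) (Rbar_locally p_infty) l ->
  is_RInt g (-P) P l.
Proof.
  intros HP Hz H.
  assert (key : forall a b z, a < -P -> P < b -> is_RInt g a b z -> is_RInt g (-P) P z).
  { intros a b z Ha Hb Hi.
    assert (Hex : ex_RInt g (-P) P).
    { apply ex_RInt_Chasles_2 with a. lra.
      apply ex_RInt_Chasles_1 with b. lra. exists z; exact Hi. }
    pose proof (RInt_correct _ _ _ Hex) as HI.
    assert (H1 : is_RInt g a (-P) zero).
    { eapply is_RInt_ext with (f := fun _ => zero).
      - intros x Hx. rewrite Rmin_left in Hx by lra. rewrite Rmax_right in Hx by lra.
        symmetry. apply Hz. rewrite Rabs_left by lra. lra.
      - pose proof (is_RInt_const (V:=V) a (-P) zero) as Hc. replace (scal _ _) with (zero (G:=V)) in Hc. exact Hc. symmetry. exact (scal_zero_r _). }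
    assert (H2 : is_RInt g P b zero).
    { eapply is_RInt_ext with (f := fun _ => zero).
      - intros x Hx. rewrite Rmin_left in Hx by lra. rewrite Rmax_right in Hx by lra.
        symmetry. apply Hz. rewrite Rabs_right by lra. lra.
      - pose proof (is_RInt_const (V:=V) P b zero) as Hc. replace (scal _ _) with (zero (G:=V)) in Hc. exact Hc. symmetry. exact (scal_zero_r _). }
    pose proof (is_RInt_Chasles _ _ _ _ _ _ (is_RInt_Chasles _ _ _ _ _ _ H1 HI) H2) as H3.
    rewrite plus_zero_l, plus_zero_r in H3.
    assert (E : RInt g (-P) P = z).
    { rewrite <- (is_RInt_unique _ _ _ _ H3). apply is_RInt_unique. exact Hi. }
    rewrite <- E. exact HI. }
  destruct (gen_approx g l H (mkposreal 1 Rlt_0_1)) as (A & B & HAB).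
  destruct (HAB (Rmin A (-P) - 1) (Rmax B P + 1)) as (z0 & Hz0 & _).
  { pose proof (Rmin_l A (-P)); lra. } { pose proof (Rmax_l B P); lra. }
  assert (Hz1 : is_RInt g (-P) P z0).
  { apply (key (Rmin A (-P) - 1) (Rmax B P + 1)); [pose proof (Rmin_r A (-P)); lra | pose proof (Rmax_r B P); lra | exact Hz0]. }
  replace l with z0. exact Hz1.
  apply eq_close. intro eps.
  destruct (gen_approx g l H eps) as (A' & B' & HAB').
  destruct (HAB' (Rmin (Rmin A' (-P)) A - 1) (Rmax (Rmax B' P) B + 1)) as (z & Hz2 & Hb).
  { pose proof (Rmin_l (Rmin A' (-P)) A); pose proof (Rmin_l A' (-P)); lra. }
  { pose proof (Rmax_l (Rmax B' P) B); pose proof (Rmax_l B' P); lra. }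
  assert (Hz3 : is_RInt g (-P) P z).
  { apply (key (Rmin (Rmin A' (-P)) A - 1) (Rmax (Rmax B' P) B + 1));
     [pose proof (Rmin_l (Rmin A' (-P)) A); pose proof (Rmin_r A' (-P)); lra
     |pose proof (Rmax_l (Rmax B' P) B); pose proof (Rmax_r B' P); lra | exact Hz2]. }
  replace z0 with z. apply ball_sym. exact Hb.
  rewrite <- (is_RInt_unique _ _ _ _ Hz3). apply is_RInt_unique; exact Hz1.
Qed.

Lemma gen_norm_le {V : NormedModule R_AbsRing} (g : R -> V) (h : R -> R) l m :
  is_RInt_gen g (Rbar_locally m_infty) (Rbar_locally p_infty) l ->
  is_RInt_gen h (Rbar_locally m_infty) (Rbar_locally p_infty) m ->
  (forall t, norm (g t) <= h t) -> norm l <= m.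
Proof.
  intros Hg Hh Hle.
  apply Rnot_lt_le. intro Hlt.
  set (d := (norm l - m) / (2 * (norm_factor (V:=V) + 1))).
  assert (Hnf : 0 < norm_factor (V:=V)) by apply norm_factor_gt_0.
  assert (Hd : 0 < d). { unfold d. apply Rdiv_lt_0_compat; lra. }
  destruct (gen_approx g l Hg (mkposreal d Hd)) as (A1 & B1 & H1).
  destruct (gen_approx h m Hh (mkposreal d Hd)) as (A2 & B2 & H2).
  set (a := Rmin (Rmin A1 A2) 0 - 1). set (b := Rmax (Rmax B1 B2) 0 + 1).
  assert (Ha1 : a < A1) by (unfold a; pose proof (Rmin_l (Rmin A1 A2) 0); pose proof (Rmin_l A1 A2); lra).
  assert (Ha2 : a < A2) by (unfold a; pose proof (Rmin_l (Rmin A1 A2) 0); pose proof (Rmin_r A1 A2); lra).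
  assert (Hb1 : B1 < b) by (unfold b; pose proof (Rmax_l (Rmax B1 B2) 0); pose proof (Rmax_l B1 B2); lra).
  assert (Hb2 : B2 < b) by (unfold b; pose proof (Rmax_l (Rmax B1 B2) 0); pose proof (Rmax_r B1 B2); lra).
  assert (Hab : a <= b) by (unfold a, b; pose proof (Rmin_r (Rmin A1 A2) 0); pose proof (Rmax_r (Rmax B1 B2) 0); lra).
  destruct (H1 a b Ha1 Hb1) as (z1 & Hz1 & Bz1).
  destruct (H2 a b Ha2 Hb2) as (z2 & Hz2 & Bz2).
  pose proof (norm_RInt_le g h a b z1 z2 Hab (fun x _ => Hle x) Hz1 Hz2) as Hn.
  pose proof (norm_compat2 _ _ _ Bz1) as C1. simpl in C1.
  pose proof (norm_triangle_inv z1 l) as C3.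
  assert (C2 : Rabs (z2 - m) < d) by exact Bz2.
  assert (C4 : norm (minus l z1) = norm (minus z1 l)).
  { rewrite <- norm_opp, opp_minus. reflexivity. }
  apply Rabs_def2 in C2. destruct C2.
  assert (Hx : norm l <= norm z1 + norm (minus z1 l)).
  { pose proof (norm_triangle_inv l z1) as Q. apply Rabs_le_between' in Q. rewrite C4 in Q. lra. }
  assert (norm_factor (V:=V) * d + d < norm l - m).
  { unfold d. replace (norm_factor (V:=V) * ((norm l - m) / (2 * (norm_factor (V:=V) + 1))) +
      (norm l - m) / (2 * (norm_factor (V:=V) + 1))) with ((norm l - m) / 2) by (field; lra). lra. }
  nra.
Qed.

Notation CR := C_R_NormedModule.
Notation CRG := (NormedModule.AbelianGroup R_AbsRing C_R_NormedModule).
Notation CRM := (AbelianGroup.AbelianMonoid CRG).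

Lemma norm_cis x : norm (V:=CR) (cis x) = 1.
Proof.
  change (sqrt (norm (cos x) * (norm (cos x) * 1) + norm (sin x) * (norm (sin x) * 1)) = 1).
  unfold norm; simpl. unfold abs; simpl.
  rewrite !Rmult_1_r, <- !Rabs_mult, !Rabs_right.
  - rewrite <- sqrt_1. f_equal. pose proof (sin2_cos2 x). unfold Rsqr in *. lra.
  - nra. - nra.
Qed.

Lemma fst_plus (a b : C) : fst (plus (G:=CRM) a b) = plus (fst a) (fst b).
Proof. reflexivity. Qed.
Lemma snd_plus (a b : C) : snd (plus (G:=CRM) a b) = plus (snd a) (snd b).
Proof. reflexivity. Qed.

Lemma fst_sum_n (g : nat -> C) N : fst (sum_n (G:=CRM) g N) = sum_n (fun n => fst (g n)) N.
Proof.
  induction N. rewrite !sum_O; reflexivity.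
  rewrite !sum_Sn, fst_plus, IHN. reflexivity.
Qed.
Lemma snd_sum_n (g : nat -> C) N : snd (sum_n (G:=CRM) g N) = sum_n (fun n => snd (g n)) N.
Proof.
  induction N. rewrite !sum_O; reflexivity.
  rewrite !sum_Sn, snd_plus, IHN. reflexivity.
Qed.

Lemma DS_fst (a : Z -> C) N : fst (DS (G:=CRG) a N) = DS (G:=R_AbelianGroup) (fun k => fst (a k)) N.
Proof. unfold DS. rewrite fst_sum_n. apply sum_n_ext. intro j. rewrite fst_sum_n. reflexivity. Qed.
Lemma DS_snd (a : Z -> C) N : snd (DS (G:=CRG) a N) = DS (G:=R_AbelianGroup) (fun k => snd (a k)) N.
Proof. unfold DS. rewrite snd_sum_n. apply sum_n_ext. intro j. rewrite snd_sum_n. reflexivity. Qed.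

Lemma kernel_C N x : DS (G:=CRG) (fun k => cis (IZR k * x)) N = RtoC (Kf N x).
Proof.
  apply injective_projections.
  - rewrite DS_fst. reflexivity.
  - rewrite DS_snd. simpl.
    set (X := DS (G:=R_AbelianGroup) (fun k => sin (IZR k * x)) N).
    assert (H : X = opp X).
    { apply DS_antisym. intro k. rewrite opp_IZR.
      replace (- IZR k * x) with (- (IZR k * x)) by ring. apply sin_neg. }
    change (X = - X) in H. lra.
Qed.

Ltac Rring := match goal with |- ?x = ?y => change (@eq R x y) end; ring.

Lemma is_RInt_val {V : NormedModule R_AbsRing} (f : R -> V) a b l l' :
  is_RInt f a b l -> l = l' -> is_RInt f a b l'.
Proof. intros H ->; exact H. Qed.

Lemma is_RInt_Cmult_r (g : R -> C) a b (l c : C) :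
  is_RInt (V:=CR) g a b l -> is_RInt (V:=CR) (fun x => Cmult (g x) c) a b (Cmult l c).
Proof.
  intro H.
  pose proof (is_RInt_fct_extend_fst (U:=R_NormedModule) (V:=R_NormedModule) g a b l H) as H1.
  pose proof (is_RInt_fct_extend_snd (U:=R_NormedModule) (V:=R_NormedModule) g a b l H) as H2.
  apply (is_RInt_fct_extend_pair (U:=R_NormedModule) (V:=R_NormedModule)).
  - pose proof (is_RInt_minus _ _ _ _ _ _ (is_RInt_scal _ _ _ (fst c) _ H1) (is_RInt_scal _ _ _ (snd c) _ H2)) as H3.
    eapply is_RInt_ext. 2: { eapply is_RInt_val. exact H3.
      destruct l, c; unfold minus, plus, opp, scal; simpl; unfold mult; simpl. Rring. }
    intros x _. destruct c; unfold minus, plus, opp, scal, Cmult; simpl; unfold mult; simpl; Rring.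
  - pose proof (is_RInt_plus _ _ _ _ _ _ (is_RInt_scal _ _ _ (snd c) _ H1) (is_RInt_scal _ _ _ (fst c) _ H2)) as H3.
    eapply is_RInt_ext. 2: { eapply is_RInt_val. exact H3.
      destruct l, c; unfold minus, plus, opp, scal; simpl; unfold mult; simpl; Rring. }
    intros x _. destruct c; unfold minus, plus, opp, scal, Cmult; simpl; unfold mult; simpl; Rring.
Qed.

Ltac CRs := repeat progress (unfold scal, mult, plus, opp, minus, zero, Cmult, RtoC; simpl); Rring.

Lemma normCR (z : C) : norm (V:=CR) z = Cmod z.
Proof.
  change (sqrt (norm (fst z) * (norm (fst z) * 1) + norm (snd z) * (norm (snd z) * 1)) = Cmod z).
  unfold Cmod. f_equal. unfold norm; simpl. unfold abs; simpl.
  rewrite !Rmult_1_r, <- !Rabs_mult, !Rabs_right. simpl. ring. nra. nra.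
Qed.

Lemma Cmult_RtoC_scal (r : R) (z : C) : Cmult (RtoC r) z = scal (V:=CR) r z.
Proof. destruct z. apply injective_projections; CRs. Qed.

Lemma DS_lin (u v : Z -> R) (a b : R) N :
  DS (G:=R_AbelianGroup) (fun k => a * u k + b * v k) N =
  a * DS (G:=R_AbelianGroup) u N + b * DS (G:=R_AbelianGroup) v N.
Proof.
  unfold DS. rewrite <- !sum_n_R_mult_l, <- sum_n_R_plus. apply sum_n_ext. intro j.
  rewrite <- !sum_n_R_mult_l, <- sum_n_R_plus. reflexivity.
Qed.

Lemma DS_ext {G : AbelianGroup} (u v : Z -> G) N : (forall k, u k = v k) -> DS u N = DS v N.
Proof. intro H. unfold DS. apply sum_n_ext; intro j; apply sum_n_ext; intro l; apply H. Qed.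

Lemma DS_scal_mult (s : R) (z : C) (h : Z -> C) N :
  DS (G:=CRG) (fun k => scal (V:=CR) s (Cmult z (h k))) N = scal (V:=CR) s (Cmult z (DS (G:=CRG) h N)).
Proof.
  destruct z as [z1 z2].
  apply injective_projections.
  - rewrite DS_fst.
    rewrite (DS_ext _ (fun k => (s * z1) * fst (h k) + (- s * z2) * snd (h k))).
    2:{ intro k. CRs. }
    rewrite DS_lin.
    assert (E : forall X : C, fst (scal (V:=CR) s (Cmult (z1, z2) X)) = s * (z1 * fst X - z2 * snd X)).
    { intro X; destruct X; CRs. }
    rewrite E, DS_fst, DS_snd. ring.
  - rewrite DS_snd.
    rewrite (DS_ext _ (fun k => (s * z2) * fst (h k) + (s * z1) * snd (h k))).
    2:{ intro k. CRs. }
    rewrite DS_lin.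
    assert (E : forall X : C, snd (scal (V:=CR) s (Cmult (z1, z2) X)) = s * (z1 * snd X + z2 * fst X)).
    { intro X; destruct X; CRs. }
    rewrite E, DS_fst, DS_snd. ring.
Qed.

Lemma coef_rep (Delta : R) (f : R -> R) (Phi : R -> C)
  (hDelta : 0 < Delta <= PI)
  (Phi_supp : forall w : R, Delta <= Rabs w -> Phi w = RtoC 0)
  (f_inv : forall t : R,
     is_RInt_gen (V := C_R_NormedModule)
       (fun w : R => scal (/ (2 * PI)) (Cmult (Phi w) (cis (- (w * t)))))
       (Rbar_locally m_infty) (Rbar_locally p_infty)
       (RtoC (f t))) (t : R) :
  is_RInt (V:=CR) (fun w => scal (/ (2 * PI)) (Cmult (Phi w) (cis (- (w * t))))) (-PI) PI (RtoC (f t)).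
Proof.
  apply (gen_compact (V:=C_R_CompleteNormedModule)). apply PI_RGT_0.
  - intros w Hw. rewrite Phi_supp by lra. rewrite Cmult_0_l.
    apply injective_projections; CRs.
  - apply f_inv.
Qed.

Lemma sigma_rep (Delta : R) (f : R -> R) (Phi : R -> C)
  (Hc : forall t : R,
     is_RInt (V:=CR) (fun w => scal (/ (2 * PI)) (Cmult (Phi w) (cis (- (w * t))))) (-PI) PI (RtoC (f t)))
  (N : nat) (om : R) :
  is_RInt (V:=CR) (fun w => scal (/ (2 * PI)) (Cmult (Phi w) (RtoC (Kf N (om - w))))) (-PI) PI
    (DS (G:=CRG) (fun k => scal (V:=CR) (f (IZR k)) (cis (om * IZR k))) N).
Proof.
  eapply is_RInt_ext.
  2:{ eapply is_RInt_val.
      apply (is_RInt_DS (V:=CR) (fun k w => Cmult (scal (/ (2 * PI)) (Cmult (Phi w) (cis (- (w * IZR k))))) (cis (om * IZR k)))).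
      intro k. apply is_RInt_Cmult_r. apply Hc.
      apply (DS_ext (G:=CRG)). intro k. apply Cmult_RtoC_scal. }
  intros w _. simpl.
  rewrite <- kernel_C. etransitivity; [| apply DS_scal_mult]. apply (DS_ext (G:=CRG)). intro k.
  destruct (Phi w) as [p1 p2].
  apply injective_projections; unfold scal, Cmult, cis; simpl; unfold mult; simpl.
  - replace (IZR k * (om - w)) with (om * IZR k + - (w * IZR k)) by ring.
    rewrite cos_plus, sin_plus, ?cos_neg, ?sin_neg. CRs.
  - replace (IZR k * (om - w)) with (om * IZR k + - (w * IZR k)) by ring.
    rewrite cos_plus, sin_plus, ?cos_neg, ?sin_neg. CRs.
Qed.

Lemma cos_abs x : cos (Rabs x) = cos x.
Proof. destruct (Rle_or_lt 0 x). rewrite Rabs_right by lra; reflexivity. rewrite Rabs_left by lra. apply cos_neg. Qed.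

Lemma cos_le_delta d x : 0 < d <= PI -> d <= Rabs x <= 2 * PI - d -> cos x <= cos d.
Proof.
  intros Hd Hx. rewrite <- cos_abs. set (y := Rabs x) in *.
  assert (Hy0 : 0 <= y) by apply Rabs_pos.
  assert (main : forall z, d <= z <= PI -> cos z <= cos d).
  { intros z Hz. destruct (Req_dec z d) as [->|Hne]. lra.
    left. apply cos_decreasing_1; lra. }
  destruct (Rle_or_lt y PI). apply main; lra.
  replace (cos y) with (cos (2 * PI - y)). apply main; lra.
  rewrite cos_minus, cos_2PI, sin_2PI. ring.
Qed.

Lemma cos_lt_1 d : 0 < d <= PI -> cos d < 1.
Proof. intro H. rewrite <- cos_0. apply cos_decreasing_1; lra. Qed.

Lemma Phi_le1 (f : R -> R) (Phi : R -> C)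
  (f_nonneg : forall t : R, 0 <= f t)
  (f_total : is_RInt_gen f (Rbar_locally m_infty) (Rbar_locally p_infty) 1)
  (Phi_def : forall w : R,
     is_RInt_gen (V := C_R_NormedModule)
       (fun t : R => scal (f t) (cis (w * t))) (Rbar_locally m_infty) (Rbar_locally p_infty) (Phi w))
  (w : R) : Cmod (Phi w) <= 1.
Proof.
  rewrite <- normCR. apply (gen_norm_le _ f _ _ (Phi_def w) f_total).
  intro t. eapply Rle_trans. apply (norm_scal (K:=R_AbsRing) (V:=CR)). rewrite norm_cis.
  change (abs (f t)) with (Rabs (f t)). rewrite Rabs_right. lra. apply Rle_ge, f_nonneg.
Qed.

Lemma sig_bound (Delta : R) (f : R -> R) (Phi : R -> C)
  (hDelta : 0 < Delta <= PI)
  (Phi_supp : forall w : R, Delta <= Rabs w -> Phi w = RtoC 0)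
  (Phi1 : forall w, Cmod (Phi w) <= 1)
  (Hc : forall t : R,
     is_RInt (V:=CR) (fun w => scal (/ (2 * PI)) (Cmult (Phi w) (cis (- (w * t))))) (-PI) PI (RtoC (f t)))
  (om : R) (Hom : Delta < Rabs om <= PI) (N : nat) :
  Cmod (DS (G:=CRG) (fun k => scal (V:=CR) (f (IZR k)) (cis (om * IZR k))) N)
    <= 4 / (2 - 2 * cos (Rabs om - Delta)).
Proof.
  set (d := Rabs om - Delta).
  assert (Hd : 0 < d <= PI) by (unfold d; lra).
  pose proof (cos_lt_1 d Hd) as Hcd.
  set (M := 4 / (2 - 2 * cos d)).
  assert (HM : 0 <= M). { unfold M. apply Rlt_le, Rdiv_lt_0_compat; lra. }
  pose proof PI_RGT_0 as Hpi.
  rewrite <- normCR.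
  replace M with ((PI - - PI) * (/ (2 * PI) * M)) by (field; lra).
  apply (norm_RInt_le_const (V:=CR) (fun w => scal (/ (2 * PI)) (Cmult (Phi w) (RtoC (Kf N (om - w))))) (-PI) PI _ (/ (2 * PI) * M)). lra.
  2: apply (sigma_rep Delta f Phi Hc N om).
  intros w Hw. eapply Rle_trans. apply (norm_scal (K:=R_AbsRing) (V:=CR)).
  change (abs (/ (2 * PI))) with (Rabs (/ (2 * PI))).
  rewrite Rabs_right by (apply Rle_ge, Rlt_le, Rinv_0_lt_compat; lra).
  apply Rmult_le_compat_l. apply Rlt_le, Rinv_0_lt_compat; lra.
  rewrite normCR, Cmod_mult, Cmod_R, Rabs_right by (apply Rle_ge, Kf_nonneg).
  destruct (Rle_or_lt Delta (Rabs w)) as [Hw2|Hw2].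
  - rewrite Phi_supp by exact Hw2. rewrite Cmod_0. rewrite Rmult_0_l. exact HM.
  - assert (Hx : d <= Rabs (om - w) <= 2 * PI - d).
    { unfold d. split.
      - pose proof (Rabs_triang_inv om w). lra.
      - pose proof (Rabs_triang om (- w)). rewrite Rabs_Ropp in H. unfold Rminus. lra. }
    pose proof (cos_le_delta d (om - w) Hd Hx) as Hcos.
    pose proof (Kf_bound N (om - w) ltac:(lra)) as HK.
    assert (HK2 : Kf N (om - w) <= M).
    { eapply Rle_trans. exact HK. unfold M. unfold Rdiv. apply Rmult_le_compat_l. lra.
      apply Rinv_le_contravar; lra. }
    pose proof (Phi1 w). pose proof (Cmod_ge_0 (Phi w)). pose proof (Kf_nonneg N (om - w)). nra.
Qed.

Lemma real_rep (f : R -> R) (Phi : R -> C)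
  (Hc : forall t : R,
     is_RInt (V:=CR) (fun w => scal (/ (2 * PI)) (Cmult (Phi w) (cis (- (w * t))))) (-PI) PI (RtoC (f t)))
  (N : nat) :
  is_RInt (fun w => / (2 * PI) * (fst (Phi w) * Kf N w)) (-PI) PI
    (DS (G:=R_AbelianGroup) (fun k => f (IZR k)) N).
Proof.
  pose proof (is_RInt_fct_extend_fst (U:=R_NormedModule) (V:=R_NormedModule) _ _ _ _
     (sigma_rep 0 f Phi Hc N 0)) as H.
  eapply is_RInt_ext. 2: eapply is_RInt_val. 2: exact H.
  - intros w _. simpl. replace (0 - w) with (- w) by ring. rewrite Kf_even.
    destruct (Phi w). CRs.
  - rewrite DS_fst. apply DS_ext. intro k. simpl. rewrite Rmult_0_l, cos_0. CRs.
Qed.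

Lemma fst_le_Cmod (z : C) : fst z <= Cmod z.
Proof. pose proof (Rmax_Cmod z). pose proof (Rmax_l (Rabs (fst z)) (Rabs (snd z))).
  pose proof (Rle_abs (fst z)). lra. Qed.
Lemma fst_ge_Cmod (z : C) : - Cmod z <= fst z.
Proof. pose proof (Rmax_Cmod z). pose proof (Rmax_l (Rabs (fst z)) (Rabs (snd z))).
  pose proof (Rabs_maj2 (fst z)). lra. Qed.

Lemma int_Kf_scal N c : is_RInt (fun w => c * Kf N w) (-PI) PI (c * (2 * PI * INR (S N))).
Proof. apply (is_RInt_scal (V:=R_NormedModule) (Kf N) (-PI) PI c _ (int_Kf N)). Qed.

Lemma upper_bound (f : R -> R) (Phi : R -> C)
  (Phi1 : forall w, Cmod (Phi w) <= 1)
  (Hc : forall t : R,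
     is_RInt (V:=CR) (fun w => scal (/ (2 * PI)) (Cmult (Phi w) (cis (- (w * t))))) (-PI) PI (RtoC (f t)))
  (N : nat) : DS (G:=R_AbelianGroup) (fun k => f (IZR k)) N <= INR (S N).
Proof.
  pose proof PI_RGT_0.
  replace (INR (S N)) with (/ (2 * PI) * (2 * PI * INR (S N))) by (field; lra).
  eapply is_RInt_le; [| exact (real_rep f Phi Hc N) | exact (int_Kf_scal N (/ (2 * PI))) |]. lra.
  intros w _. apply Rmult_le_compat_l. apply Rlt_le, Rinv_0_lt_compat; lra.
  pose proof (Kf_nonneg N w). pose proof (fst_le_Cmod (Phi w)). pose proof (Phi1 w).
  pose proof (Cmod_ge_0 (Phi w)). nra.
Qed.

Lemma lower_bound (f : R -> R) (Phi : R -> C)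
  (Phi1 : forall w, Cmod (Phi w) <= 1)
  (Hc : forall t : R,
     is_RInt (V:=CR) (fun w => scal (/ (2 * PI)) (Cmult (Phi w) (cis (- (w * t))))) (-PI) PI (RtoC (f t)))
  (eps d : R) (Heps : 0 < eps < 1) (Hd : 0 < d <= PI)
  (Hcont : forall w, Rabs w < d -> 1 - eps <= fst (Phi w))
  (N : nat) :
  (1 - eps) * INR (S N) - 2 * (4 / (2 - 2 * cos d)) <= DS (G:=R_AbelianGroup) (fun k => f (IZR k)) N.
Proof.
  pose proof PI_RGT_0.
  pose proof (cos_lt_1 d Hd) as Hcd.
  set (M := 4 / (2 - 2 * cos d)).
  assert (HM : 0 <= M). { unfold M. apply Rlt_le, Rdiv_lt_0_compat; lra. }
  assert (I1 : is_RInt (fun w => / (2 * PI) * ((1 - eps) * Kf N w - 2 * M)) (-PI) PI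
             ((1 - eps) * INR (S N) - 2 * M)).
  { pose proof (int_Kf_scal N (1 - eps)) as A1.
    pose proof (is_RInt_const (V:=R_NormedModule) (-PI) PI (2 * M)) as A2.
    pose proof (is_RInt_minus _ _ _ _ _ _ A1 A2) as A3.
    pose proof (is_RInt_scal _ _ _ (/ (2 * PI)) _ A3) as A4.
    eapply is_RInt_ext. 2: eapply is_RInt_val. 2: exact A4.
    - intros; CRs.
    - repeat progress (unfold scal, mult, plus, opp, minus; simpl). field. lra. }
  eapply is_RInt_le; [| exact I1 | exact (real_rep f Phi Hc N) |]. lra.
  intros w Hw. apply Rmult_le_compat_l. apply Rlt_le, Rinv_0_lt_compat; lra.
  pose proof (Kf_nonneg N w) as HK0.
  destruct (Rlt_or_le (Rabs w) d) as [Hw2|Hw2].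
  - pose proof (Hcont w Hw2). nra.
  - assert (Hx : d <= Rabs w <= 2 * PI - d).
    { split. lra. unfold Rabs; destruct Rcase_abs; lra. }
    pose proof (cos_le_delta d w Hd Hx) as Hcos.
    assert (HK : Kf N w <= M).
    { eapply Rle_trans. apply (Kf_bound N w). lra. unfold M, Rdiv. apply Rmult_le_compat_l. lra.
      apply Rinv_le_contravar; lra. }
    pose proof (fst_ge_Cmod (Phi w)). pose proof (Phi1 w). pose proof (Cmod_ge_0 (Phi w)). nra.
Qed.

Lemma abs_sin_le y : Rabs (sin y) <= Rabs y.
Proof.
  assert (Hp : forall y, 0 < y -> Rabs (sin y) <= y).
  { intros z Hz. pose proof (sin_lt_x z Hz). apply Rabs_le. split; [|lra].
    destruct (Rle_or_lt 1 z). pose proof (SIN_bound z). lra.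
    pose proof PI_RGT_0. pose proof PI2_1 as HP. assert (0 <= sin z) by (apply sin_ge_0; lra). lra. }
  destruct (Rtotal_order y 0) as [H|[H|H]].
  - rewrite (Rabs_left y) by lra. rewrite <- Rabs_Ropp, <- sin_neg. apply Hp. lra.
  - subst. rewrite sin_0. lra.
  - rewrite (Rabs_right y) by lra. apply Hp; lra.
Qed.

Lemma one_minus_cos x : 1 - cos x <= x * x / 2.
Proof.
  replace x with (2 * (x / 2)) at 1 by field. rewrite cos_2a_sin.
  pose proof (abs_sin_le (x / 2)) as H.
  assert (H2 : sin (x/2) ^ 2 <= (x/2) ^ 2).
  { rewrite <- (pow2_abs (sin (x/2))), <- (pow2_abs (x/2)). apply pow_incr.
    split; [apply Rabs_pos | exact H]. }
  simpl in H2. nra.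
Qed.

Lemma split3 (h : R -> R) a b T l : a < -T -> 0 < T -> T < b -> is_RInt h a b l ->
  ex_RInt h a (-T) /\ ex_RInt h (-T) T /\ ex_RInt h T b /\
  l = RInt h a (-T) + RInt h (-T) T + RInt h T b.
Proof.
  intros H1 H2 H3 Hi.
  assert (Ex : ex_RInt h a b) by (exists l; exact Hi).
  assert (E1 : ex_RInt h a (-T)) by (apply (ex_RInt_Chasles_1 (V:=R_CompleteNormedModule)) with b; [lra | exact Ex]).
  assert (E23 : ex_RInt h (-T) b) by (apply (ex_RInt_Chasles_2 (V:=R_CompleteNormedModule)) with a; [lra | exact Ex]).
  assert (E2 : ex_RInt h (-T) T) by (apply (ex_RInt_Chasles_1 (V:=R_CompleteNormedModule)) with b; [lra | exact E23]).
  assert (E3 : ex_RInt h T b) by (apply (ex_RInt_Chasles_2 (V:=R_CompleteNormedModule)) with (-T); [lra | exact E23]).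
  split; [exact E1|split; [exact E2 | split; [exact E3|]]].
  rewrite <- (is_RInt_unique (V:=R_CompleteNormedModule) _ _ _ _ Hi).
  rewrite <- (RInt_Chasles (V:=R_CompleteNormedModule) h a (-T) b E1 E23).
  rewrite <- (RInt_Chasles (V:=R_CompleteNormedModule) h (-T) T b E2 E3).
  change (plus (RInt h a (-T)) (plus (RInt h (-T) T) (RInt h T b)) =
          RInt h a (-T) + RInt h (-T) T + RInt h T b).
  unfold plus; simpl. ring.
Qed.

Lemma cont0 (f : R -> R) (Phi : R -> C)
  (f_nonneg : forall t : R, 0 <= f t)
  (f_total : is_RInt_gen f (Rbar_locally m_infty) (Rbar_locally p_infty) 1)
  (Phi_def : forall w : R,
     is_RInt_gen (V := C_R_NormedModule)
       (fun t : R => scal (f t) (cis (w * t))) (Rbar_locally m_infty) (Rbar_locally p_infty) (Phi w))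
  (eps : R) (Heps : 0 < eps < 1) :
  exists d, 0 < d <= PI /\ forall w, Rabs w < d -> 1 - eps <= fst (Phi w).
Proof.
  set (eta := eps / 5). assert (Heta : 0 < eta) by (unfold eta; lra).
  destruct (gen_approx f 1 f_total (mkposreal eta Heta)) as (A & B & HAB).
  set (T := Rmax (Rabs A) (Rabs B) + 1).
  assert (HT1 : -T < A).
  { unfold T. pose proof (Rmax_l (Rabs A) (Rabs B)). pose proof (Rabs_maj2 A). lra. }
  assert (HT2 : B < T).
  { unfold T. pose proof (Rmax_r (Rabs A) (Rabs B)). pose proof (Rle_abs B). lra. }
  assert (HT : 0 < T).
  { unfold T. pose proof (Rmax_l (Rabs A) (Rabs B)). pose proof (Rabs_pos A). lra. }
  destruct (HAB (-T) T HT1 HT2) as (I0 & HI0 & BI0).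
  assert (BI : Rabs (I0 - 1) < eta) by exact BI0. clear BI0.
  apply Rabs_def2 in BI.
  pose proof PI_RGT_0 as Hpi.
  set (m := Rmin 1 eta).
  assert (Hm : 0 < m) by (unfold m; apply Rmin_pos; lra).
  assert (Hm1 : m <= 1) by apply Rmin_l.
  assert (Hm2 : m <= eta) by apply Rmin_r.
  exists (Rmin PI (m / T)). split.
  { split. apply Rmin_pos. lra. apply Rdiv_lt_0_compat; lra. apply Rmin_l. }
  intros w Hw.
  assert (HwT : Rabs w * T < m).
  { pose proof (Rmin_r PI (m / T)). apply Rmult_lt_reg_r with (/ T). apply Rinv_0_lt_compat; lra.
    rewrite Rmult_assoc, Rinv_r by lra. lra. }
  set (c := (w * T) * (w * T) / 2).
  assert (Hc0 : 0 <= c) by (unfold c; nra).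
  assert (Hc1 : c <= eta / 2).
  { unfold c. assert (Rabs (w * T) < m) by (rewrite Rabs_mult, (Rabs_right T) by lra; exact HwT).
    assert ((w * T) * (w * T) <= m * m).
    { pose proof (pow2_abs (w * T)) as P2. simpl in P2. pose proof (Rabs_pos (w * T)). nra. }
    nra. }
  destruct (gen_approx _ _ (Phi_def w) (mkposreal eta Heta)) as (A' & B' & H').
  set (a := Rmin (Rmin A' (-T)) A - 1). set (b := Rmax (Rmax B' T) B + 1).
  assert (Ha1 : a < A') by (unfold a; pose proof (Rmin_l (Rmin A' (-T)) A); pose proof (Rmin_l A' (-T)); lra).
  assert (Ha2 : a < A) by (unfold a; pose proof (Rmin_r (Rmin A' (-T)) A); lra).
  assert (Ha3 : a < -T) by (unfold a; pose proof (Rmin_l (Rmin A' (-T)) A); pose proof (Rmin_r A' (-T)); lra).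
  assert (Hb1 : B' < b) by (unfold b; pose proof (Rmax_l (Rmax B' T) B); pose proof (Rmax_l B' T); lra).
  assert (Hb2 : B < b) by (unfold b; pose proof (Rmax_r (Rmax B' T) B); lra).
  assert (Hb3 : T < b) by (unfold b; pose proof (Rmax_l (Rmax B' T) B); pose proof (Rmax_r B' T); lra).
  destruct (H' a b Ha1 Hb1) as (z' & Hz' & Bz').
  destruct (HAB a b Ha2 Hb2) as (z & Hz & Bz).
  assert (Bz2 : Rabs (z - 1) < eta) by exact Bz. clear Bz. apply Rabs_def2 in Bz2.
  destruct Bz' as [Bz1 _].
  assert (Bz3 : Rabs (fst z' - fst (Phi w)) < eta) by exact Bz1. clear Bz1. apply Rabs_def2 in Bz3.
  assert (Hfc : is_RInt (fun t => f t * cos (w * t)) a b (fst z')).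
  { pose proof (is_RInt_fct_extend_fst (U:=R_NormedModule) (V:=R_NormedModule) _ _ _ _ Hz') as K.
    eapply is_RInt_ext. 2: exact K. intros; CRs. }
  assert (Hg : is_RInt (fun t => f t - f t * cos (w * t)) a b (z - fst z')).
  { pose proof (is_RInt_minus _ _ _ _ _ _ Hz Hfc) as K. exact K. }
  destruct (split3 f a b T z Ha3 HT Hb3 Hz) as (Ef1 & Ef2 & Ef3 & Ez).
  destruct (split3 _ a b T _ Ha3 HT Hb3 Hg) as (Eg1 & Eg2 & Eg3 & Ezg).
  assert (EI0 : RInt f (-T) T = I0) by (apply (is_RInt_unique (V:=R_CompleteNormedModule)); exact HI0).
  assert (G1 : RInt (fun t => f t - f t * cos (w * t)) a (-T) <= 2 * RInt f a (-T)).
  { change (2 * RInt f a (-T)) with (scal 2 (RInt f a (-T))).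
    eapply is_RInt_le; [ | apply (RInt_correct (V:=R_CompleteNormedModule)); exact Eg1
    | apply (is_RInt_scal (V:=R_NormedModule)); apply (RInt_correct (V:=R_CompleteNormedModule)); exact Ef1 | ]. lra.
    intros t _. pose proof (f_nonneg t). pose proof (COS_bound (w * t)).
    cbv beta. change (scal 2 (f t)) with (2 * f t). nra. }
  assert (G3 : RInt (fun t => f t - f t * cos (w * t)) T b <= 2 * RInt f T b).
  { change (2 * RInt f T b) with (scal 2 (RInt f T b)).
    eapply is_RInt_le; [ | apply (RInt_correct (V:=R_CompleteNormedModule)); exact Eg3
    | apply (is_RInt_scal (V:=R_NormedModule)); apply (RInt_correct (V:=R_CompleteNormedModule)); exact Ef3 | ]. lra.
    intros t _. pose proof (f_nonneg t). pose proof (COS_bound (w * t)).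
    cbv beta. change (scal 2 (f t)) with (2 * f t). nra. }
  assert (G2 : RInt (fun t => f t - f t * cos (w * t)) (-T) T <= c * RInt f (-T) T).
  { change (c * RInt f (-T) T) with (scal c (RInt f (-T) T)).
    eapply is_RInt_le; [ | apply (RInt_correct (V:=R_CompleteNormedModule)); exact Eg2
    | apply (is_RInt_scal (V:=R_NormedModule)); apply (RInt_correct (V:=R_CompleteNormedModule)); exact Ef2 | ]. lra.
    intros t Ht. pose proof (f_nonneg t). pose proof (one_minus_cos (w * t)).
    cbv beta. change (scal c (f t)) with (c * f t).
    assert ((w * t) * (w * t) / 2 <= c).
    { unfold c. assert (t * t <= T * T) by nra.
      assert (w * w * (t * t) <= w * w * (T * T)) by (apply Rmult_le_compat_l; nra).
      replace ((w * t) * (w * t)) with (w * w * (t * t)) by ring.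
      replace ((w * T) * (w * T)) with (w * w * (T * T)) by ring. lra. }
    nra. }
  rewrite EI0 in G2, Ez.
  assert (I0 <= 2) by (unfold eta in *; lra).
  assert (c * I0 <= c * 2) by (apply Rmult_le_compat_l; lra).
  assert (c * I0 <= eta) by lra.
  assert (Hf1 : 0 <= RInt f a (-T)).
  { apply (is_RInt_ge_0 f a (-T)). lra. apply (RInt_correct (V:=R_CompleteNormedModule)); exact Ef1.
    intros; apply f_nonneg. }
  unfold eta in *. lra.
Qed.

Lemma arch_le (c s K : R) : 0 <= K -> (forall N : nat, c - K / INR (S N) <= s) -> c <= s.
Proof.
  intros HK H. apply Rnot_lt_le. intro Hlt.
  destruct (archimed_cor1 ((c - s) / (K + 1))) as [N [HN1 HN2]].
  { apply Rdiv_lt_0_compat; lra. }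
  specialize (H N).
  assert (HNpos : 0 < INR N) by (apply lt_0_INR; exact HN2).
  assert (HSN : INR N <= INR (S N)) by (rewrite S_INR; lra).
  assert (K / INR (S N) <= K / INR N).
  { unfold Rdiv. apply Rmult_le_compat_l. exact HK. apply Rinv_le_contravar; lra. }
  assert (K / INR N < c - s).
  { destruct (Req_dec K 0) as [->|HK0]. unfold Rdiv; rewrite Rmult_0_l; lra.
    unfold Rdiv. apply Rlt_le_trans with (K * ((c - s) / (K + 1))).
    - apply Rmult_lt_compat_l. lra. exact HN1.
    - replace (K * ((c - s) / (K + 1))) with ((c - s) - (c - s) / (K + 1)) by (field; lra).
      assert (0 < (c - s) / (K + 1)) by (apply Rdiv_lt_0_compat; lra). lra. }
  lra.
Qed.


Lemma sum_n_nonneg (u : nat -> R) N : (forall n, 0 <= u n) -> 0 <= sum_n u N.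
Proof.
  intro H. induction N. rewrite sum_O; apply H. rewrite sum_Sn. change (0 <= sum_n u N + u (S N)).
  pose proof (H (S N)); lra.
Qed.

Lemma PP_S (a : Z -> R) (a_nonneg : forall k, 0 <= a k) m : PP (G:=R_AbelianGroup) a (S m) = PP (G:=R_AbelianGroup) a m + a (Z.of_nat (S m)).
Proof. unfold PP. rewrite sum_Sn. reflexivity. Qed.
Lemma QQ_S (a : Z -> R) (a_nonneg : forall k, 0 <= a k) m : QQ (G:=R_AbelianGroup) a (S (S m)) = QQ (G:=R_AbelianGroup) a (S m) + a (- Z.of_nat (S (S m)))%Z.
Proof. unfold QQ. rewrite sum_Sn. reflexivity. Qed.

Lemma PP_nonneg (a : Z -> R) (a_nonneg : forall k, 0 <= a k) m : 0 <= PP (G:=R_AbelianGroup) a m.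
Proof. unfold PP. apply sum_n_nonneg. intro; apply a_nonneg. Qed.
Lemma QQ_nonneg (a : Z -> R) (a_nonneg : forall k, 0 <= a k) m : 0 <= QQ (G:=R_AbelianGroup) a m.
Proof. unfold QQ. destruct m. apply Rle_refl. apply sum_n_nonneg. intro; apply a_nonneg. Qed.

Lemma PP_incr (a : Z -> R) (a_nonneg : forall k, 0 <= a k) m : PP (G:=R_AbelianGroup) a m <= PP (G:=R_AbelianGroup) a (S m).
Proof. rewrite (PP_S a a_nonneg). pose proof (a_nonneg (Z.of_nat (S m))). lra. Qed.
Lemma QQ_incr (a : Z -> R) (a_nonneg : forall k, 0 <= a k) m : QQ (G:=R_AbelianGroup) a m <= QQ (G:=R_AbelianGroup) a (S m).
Proof. destruct m. exact (QQ_nonneg a a_nonneg 1). rewrite (QQ_S a a_nonneg). pose proof (a_nonneg (- Z.of_nat (S (S m)))%Z). lra. Qed.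

Lemma TT_R (a : Z -> R) (a_nonneg : forall k, 0 <= a k) m : TT (G:=R_AbelianGroup) a m = PP (G:=R_AbelianGroup) a m + QQ (G:=R_AbelianGroup) a m.
Proof. reflexivity. Qed.

Lemma TT_incr (a : Z -> R) (a_nonneg : forall k, 0 <= a k) m : TT (G:=R_AbelianGroup) a m <= TT (G:=R_AbelianGroup) a (S m).
Proof. rewrite !(TT_R a a_nonneg). pose proof (PP_incr a a_nonneg m). pose proof (QQ_incr a a_nonneg m). lra. Qed.

Lemma TT_mono (a : Z -> R) (a_nonneg : forall k, 0 <= a k) m k : TT (G:=R_AbelianGroup) a m <= TT (G:=R_AbelianGroup) a (m + k).
Proof. induction k. rewrite Nat.add_0_r; lra. rewrite Nat.add_succ_r. pose proof (TT_incr a a_nonneg (m + k)). lra. Qed.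

Lemma TT_nonneg (a : Z -> R) (a_nonneg : forall k, 0 <= a k) m : 0 <= TT (G:=R_AbelianGroup) a m.
Proof. rewrite (TT_R a a_nonneg). pose proof (PP_nonneg a a_nonneg m). pose proof (QQ_nonneg a a_nonneg m). lra. Qed.

Lemma sum_TT_lower (a : Z -> R) (a_nonneg : forall k, 0 <= a k) M N : INR (S N) * TT (G:=R_AbelianGroup) a M <= sum_n (TT (G:=R_AbelianGroup) a) (M + N).
Proof.
  induction N.
  - rewrite Nat.add_0_r. simpl (INR 1). rewrite Rmult_1_l. destruct M.
    + rewrite sum_O. lra.
    + rewrite sum_Sn. change (TT a (S M) <= sum_n (TT a) M + TT a (S M)).
      pose proof (sum_n_nonneg (TT a) M (TT_nonneg a a_nonneg)) as Hs. change (0 <= sum_n (TT a) M) in Hs. lra.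
  - rewrite Nat.add_succ_r, sum_Sn. change (INR (S (S N)) * TT a M <= sum_n (TT a) (M + N) + TT a (S (M + N))).
    rewrite (S_INR (S N)). pose proof (TT_mono a a_nonneg M (S N)). rewrite Nat.add_succ_r in H. lra.
Qed.

Lemma sum_TT_upper (a : Z -> R) (a_nonneg : forall k, 0 <= a k) N : sum_n (TT (G:=R_AbelianGroup) a) N <= INR (S N) * TT (G:=R_AbelianGroup) a N.
Proof.
  induction N.
  - rewrite sum_O. simpl. lra.
  - rewrite sum_Sn. change (sum_n (TT a) N + TT a (S N) <= INR (S (S N)) * TT a (S N)).
    rewrite (S_INR (S N)). pose proof (TT_incr a a_nonneg N). pose proof (pos_INR (S N)). nra.
Qed.


Lemma real_part (f : R -> R) (Phi : R -> C)
  (f_nonneg : forall t : R, 0 <= f t)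
  (Phi1 : forall w, Cmod (Phi w) <= 1)
  (Hc : forall t : R,
     is_RInt (V:=CR) (fun w => scal (/ (2 * PI)) (Cmult (Phi w) (cis (- (w * t))))) (-PI) PI (RtoC (f t)))
  (Hcont : forall eps, 0 < eps < 1 -> exists d, 0 < d <= PI /\ forall w, Rabs w < d -> 1 - eps <= fst (Phi w)) :
  exists l1 l2 : R,
    is_series (fun n : nat => f (IZR (Z.of_nat n))) l1 /\
    is_series (fun n : nat => f (IZR (- Z.of_nat (S n))%Z)) l2 /\
    1 = l1 + l2.
Proof.
  set (a := fun k : Z => f (IZR k)).
  assert (an : forall k, 0 <= a k) by (intro; apply f_nonneg).
  assert (HS : forall N, DS (G:=R_AbelianGroup) a N = sum_n (TT (G:=R_AbelianGroup) a) N) by (intro; apply DS_TT).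
  assert (HT1 : forall M, TT (G:=R_AbelianGroup) a M <= 1).
  { intro M. apply (arch_le _ 1 (INR M)). apply pos_INR. intro N.
    pose proof (sum_TT_lower a an M N) as L1.
    pose proof (upper_bound f Phi Phi1 Hc (M + N)) as U. fold a in U. rewrite HS in U.
    change (INR (S N) * TT a M <= sum_n (TT a) (M + N)) in L1.
    replace (INR (S (M + N))) with (INR (S N) + INR M) in U by (rewrite !S_INR, plus_INR; ring).
    assert (HSN : 0 < INR (S N)) by (apply lt_0_INR; lia).
    apply Rmult_le_reg_r with (INR (S N)). exact HSN.
    assert (Hx : INR M / INR (S N) * INR (S N) = INR M) by (field; apply Rgt_not_eq; lra).
    change (INR (S N) * TT a M <= sum_n (TT a) (M + N)) in L1.
    change (sum_n (TT a) (M + N) <= INR (S N) + INR M) in U.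
    lra. }
  assert (HP1 : forall m, PP (G:=R_AbelianGroup) a m <= 1).
  { intro m. pose proof (HT1 m). rewrite (TT_R a an) in H. pose proof (QQ_nonneg a an m). lra. }
  assert (HQ1 : forall m, QQ (G:=R_AbelianGroup) a m <= 1).
  { intro m. pose proof (HT1 m). rewrite (TT_R a an) in H. pose proof (PP_nonneg a an m). lra. }
  destruct (ex_finite_lim_seq_incr (PP (G:=R_AbelianGroup) a) 1 (PP_incr a an) HP1) as [l1 Hl1].
  destruct (ex_finite_lim_seq_incr (fun m => QQ (G:=R_AbelianGroup) a (S m)) 1
     (fun m => QQ_incr a an (S m)) (fun m => HQ1 (S m))) as [l2 Hl2].
  assert (HQl : is_lim_seq (QQ (G:=R_AbelianGroup) a) l2) by (apply is_lim_seq_incr_1; exact Hl2).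
  assert (HTl : is_lim_seq (TT (G:=R_AbelianGroup) a) (l1 + l2)).
  { eapply is_lim_seq_ext. 2: apply (is_lim_seq_plus' _ _ _ _ Hl1 HQl). intro m. symmetry. apply TT_R. exact an. }
  assert (Hle1 : l1 + l2 <= 1).
  { pose proof (is_lim_seq_le _ _ _ _ HT1 HTl (is_lim_seq_const 1)) as Q. simpl in Q. exact Q. }
  assert (HTs : forall N, TT (G:=R_AbelianGroup) a N <= l1 + l2)
    by (apply is_lim_seq_incr_compare; [exact HTl | apply TT_incr; exact an]).
  assert (Hge : forall eps, 0 < eps < 1 -> 1 - eps <= l1 + l2).
  { intros eps Heps. destruct (Hcont eps Heps) as (d & Hd & Hcd).
    apply (arch_le _ _ (2 * (4 / (2 - 2 * cos d)))).
    { pose proof (cos_lt_1 d Hd). apply Rmult_le_pos. lra. apply Rlt_le, Rdiv_lt_0_compat; lra. }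
    intro N.
    pose proof (lower_bound f Phi Phi1 Hc eps d Heps Hd Hcd N) as L. fold a in L. rewrite HS in L.
    pose proof (sum_TT_upper a an N) as U.
    change (sum_n (TT a) N <= INR (S N) * TT a N) in U.
    pose proof (HTs N).
    assert (HSN : 0 < INR (S N)) by (apply lt_0_INR; lia).
    apply Rmult_le_reg_r with (INR (S N)). exact HSN.
    set (K0 := 2 * (4 / (2 - 2 * cos d))) in *.
    assert (Hx : K0 / INR (S N) * INR (S N) = K0) by (field; apply Rgt_not_eq; lra).
    change ((1 - eps) * INR (S N) - K0 <= sum_n (TT a) N) in L.
    assert (INR (S N) * TT a N <= INR (S N) * (l1 + l2)) by (apply Rmult_le_compat_l; lra).
    lra. }
  exists l1, l2. split; [exact Hl1 | split; [exact Hl2 |]].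
  apply Rle_antisym; [|exact Hle1].
  apply Rnot_lt_le. intro Hlt. pose proof (HTs O). pose proof (TT_nonneg a an O).
  pose proof (Hge ((1 - (l1 + l2)) / 2) ltac:(lra)). lra.
Qed.

Lemma series_fst (u : nat -> C) L : is_series (V:=CR) u L -> is_series (fun n => fst (u n)) (fst L).
Proof.
  unfold is_series. intro H. apply filterlim_locally. intro eps.
  pose proof (proj1 (filterlim_locally _ _) H eps) as H'.
  eapply filter_imp. 2: exact H'. intros n [Hb _].
  rewrite <- fst_sum_n. exact Hb.
Qed.

Lemma series_snd (u : nat -> C) L : is_series (V:=CR) u L -> is_series (fun n => snd (u n)) (snd L).
Proof.
  unfold is_series. intro H. apply filterlim_locally. intro eps.
  pose proof (proj1 (filterlim_locally _ _) H eps) as H'.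
  eapply filter_imp. 2: exact H'. intros n [_ Hb].
  rewrite <- snd_sum_n. exact Hb.
Qed.

Lemma cesaro_zero (x : nat -> R) (lam M : R) :
  is_lim_seq x lam -> (forall N, Rabs (sum_n x N) <= M) -> lam = 0.
Proof.
  intros H HM. apply is_lim_seq_Reals in H. pose proof (Cesaro_1 x lam H) as C.
  assert (HM0 : 0 <= M) by (pose proof (HM O); pose proof (Rabs_pos (sum_n x O)); lra).
  destruct (Req_dec lam 0) as [E|Hne]. exact E. exfalso.
  assert (Hl : 0 < Rabs lam) by (apply Rabs_pos_lt; exact Hne).
  destruct (C (Rabs lam / 2) ltac:(lra)) as [N0 HN0].
  destruct (archimed_cor1 (Rabs lam / (2 * (M + 1)))) as [N1 [HN1 HN1']].
  { apply Rdiv_lt_0_compat; lra. }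
  specialize (HN0 (S (N0 + N1)) ltac:(lia)). unfold R_dist in HN0.
  simpl pred in HN0. rewrite <- sum_n_Reals in HN0.
  assert (Hpos1 : 0 < INR N1) by (apply lt_0_INR; exact HN1').
  assert (HN : INR N1 <= INR (S (N0 + N1))) by (apply le_INR; lia).
  set (n := INR (S (N0 + N1))) in *.
  assert (Hv : Rabs (sum_n x (N0 + N1) / n) <= M / INR N1).
  { unfold Rdiv. rewrite Rabs_mult, Rabs_inv, (Rabs_right n) by lra.
    apply Rmult_le_compat. apply Rabs_pos. apply Rlt_le, Rinv_0_lt_compat; lra.
    apply HM. apply Rinv_le_contravar; lra. }
  assert (Hb : M / INR N1 < Rabs lam / 2).
  { unfold Rdiv. apply Rle_lt_trans with (M * (Rabs lam / (2 * (M + 1)))).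
    apply Rmult_le_compat_l. lra. lra.
    replace (M * (Rabs lam / (2 * (M + 1)))) with (Rabs lam / 2 - Rabs lam / (2 * (M + 1))) by (field; lra).
    assert (0 < Rabs lam / (2 * (M + 1))) by (apply Rdiv_lt_0_compat; lra). unfold Rdiv in *. lra. }
  pose proof (Rabs_triang_inv lam (sum_n x (N0 + N1) / n)).
  rewrite Rabs_minus_sym in HN0. lra.
Qed.

Lemma comp_part (x : Z -> R) (l1 l2 : R) (M : R)
  (H1 : is_series (fun n => x (Z.of_nat n)) l1)
  (H2 : is_series (fun n => x (- Z.of_nat (S n))%Z) l2)
  (HB : forall N, Rabs (DS (G:=R_AbelianGroup) x N) <= M) : l1 + l2 = 0.
Proof.
  apply (cesaro_zero (TT (G:=R_AbelianGroup) x) _ M).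
  - change (is_lim_seq (fun m => PP (G:=R_AbelianGroup) x m + QQ (G:=R_AbelianGroup) x m) (l1 + l2)).
    apply is_lim_seq_plus'. exact H1.
    apply is_lim_seq_incr_1. exact H2.
  - intro N. change (Rabs (sum_n (TT x) N) <= M). rewrite <- DS_TT. apply HB.
Qed.

Lemma complex_part (Delta : R) (f : R -> R) (Phi : R -> C)
  (hDelta : 0 < Delta <= PI)
  (f_nonneg : forall t : R, 0 <= f t)
  (Phi_supp : forall w : R, Delta <= Rabs w -> Phi w = RtoC 0)
  (Phi1 : forall w, Cmod (Phi w) <= 1)
  (Hc : forall t : R,
     is_RInt (V:=CR) (fun w => scal (/ (2 * PI)) (Cmult (Phi w) (cis (- (w * t))))) (-PI) PI (RtoC (f t)))
  (l1 l2 : R)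
  (Hl1 : is_series (fun n : nat => f (IZR (Z.of_nat n))) l1)
  (Hl2 : is_series (fun n : nat => f (IZR (- Z.of_nat (S n))%Z)) l2)
  (om : R) (Hom : Delta < Rabs om <= PI) :
  exists L1 L2 : C,
    is_series (V:=CR) (fun n : nat => scal (V:=CR) (f (IZR (Z.of_nat n))) (cis (om * IZR (Z.of_nat n)))) L1 /\
    is_series (V:=CR) (fun n : nat => scal (V:=CR) (f (IZR (- Z.of_nat (S n))%Z)) (cis (om * IZR (- Z.of_nat (S n))%Z))) L2 /\
    RtoC 0 = plus L1 L2.
Proof.
  set (c := fun k : Z => scal (V:=CR) (f (IZR k)) (cis (om * IZR k))).
  assert (Hn : forall k, norm (V:=C_R_CompleteNormedModule) (c k) <= f (IZR k)).
  { intro k. eapply Rle_trans. apply (norm_scal (K:=R_AbsRing) (V:=CR)). rewrite norm_cis.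
    change (abs (f (IZR k))) with (Rabs (f (IZR k))). rewrite Rabs_right. lra. apply Rle_ge, f_nonneg. }
  destruct (ex_series_le (V:=C_R_CompleteNormedModule) (fun n => c (Z.of_nat n)) _ (fun n => Hn _)
     (ex_intro _ l1 Hl1)) as [L1 HL1].
  destruct (ex_series_le (V:=C_R_CompleteNormedModule) (fun n => c (- Z.of_nat (S n))%Z) _ (fun n => Hn _)
     (ex_intro _ l2 Hl2)) as [L2 HL2].
  set (M := 4 / (2 - 2 * cos (Rabs om - Delta))).
  pose proof (sig_bound Delta f Phi hDelta Phi_supp Phi1 Hc om Hom) as SB.
  exists L1, L2. split; [exact HL1 | split; [exact HL2 |]].
  assert (E1 : fst L1 + fst L2 = 0).
  { apply (comp_part (fun k => fst (c k)) _ _ M).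
    apply (series_fst (fun n => c (Z.of_nat n))). exact HL1.
    apply (series_fst (fun n => c (- Z.of_nat (S n))%Z)). exact HL2.
    intro N. rewrite <- DS_fst. eapply Rle_trans. 2: apply (SB N).
    pose proof (Rmax_Cmod (DS (G:=CRG) c N)). pose proof (Rmax_l (Rabs (fst (DS (G:=CRG) c N))) (Rabs (snd (DS (G:=CRG) c N)))).
    unfold c in *. lra. }
  assert (E2 : snd L1 + snd L2 = 0).
  { apply (comp_part (fun k => snd (c k)) _ _ M).
    apply (series_snd (fun n => c (Z.of_nat n))). exact HL1.
    apply (series_snd (fun n => c (- Z.of_nat (S n))%Z)). exact HL2.
    intro N. rewrite <- DS_snd. eapply Rle_trans. 2: apply (SB N).
    pose proof (Rmax_Cmod (DS (G:=CRG) c N)). pose proof (Rmax_r (Rabs (fst (DS (G:=CRG) c N))) (Rabs (snd (DS (G:=CRG) c N)))).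
    unfold c in *. lra. }
  apply injective_projections; simpl; unfold plus; simpl; lra.
Qed.

Theorem lemma4 (Delta : R) (f : R -> R) (Phi : R -> C)
  (hDelta : 0 < Delta <= PI)
  (f_nonneg : forall t : R, 0 <= f t)
  (f_total : is_integral_R f 1)
  (Phi_def : forall w : R,
     is_integral_R (V := C_R_NormedModule)
       (fun t : R => scal (f t) (cis (w * t))) (Phi w))
  (Phi_supp : forall w : R, Delta <= Rabs w -> Phi w = RtoC 0)
  (f_inv : forall t : R,
     is_integral_R (V := C_R_NormedModule)
       (fun w : R => scal (/ (2 * PI)) (Cmult (Phi w) (cis (- (w * t)))))
       (RtoC (f t))) :
  (forall k : Z, 0 <= f (IZR k)) /\
  is_sumZ (fun k : Z => f (IZR k)) 1 /\
  (forall w : R, Delta < Rabs w <= PI ->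
     is_sumZ (V := C_R_NormedModule)
       (fun k : Z => scal (f (IZR k)) (cis (w * IZR k))) (RtoC 0)).
Proof.
  pose proof (coef_rep Delta f Phi hDelta Phi_supp f_inv) as Hc.
  pose proof (Phi_le1 f Phi f_nonneg f_total Phi_def) as Phi1.
  pose proof (fun eps H => cont0 f Phi f_nonneg f_total Phi_def eps H) as Hcont.
  destruct (real_part f Phi f_nonneg Phi1 Hc Hcont) as (l1 & l2 & Hl1 & Hl2 & E).
  split; [intro k; apply f_nonneg|]. split.
  - exists l1, l2. split; [exact Hl1 | split; [exact Hl2 | exact E]].
  - intros w Hw.
    destruct (complex_part Delta f Phi hDelta f_nonneg Phi_supp Phi1 Hc l1 l2 Hl1 Hl2 w Hw)
      as (L1 & L2 & HL1 & HL2 & EL).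
    exists L1, L2. split; [exact HL1 | split; [exact HL2 | exact EL]].
Qed.
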